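(* Let $\mathcal A$ be a Banach algebra and $M$ a closed two-sided ideal of $\mathcal A$ of codimension one which is not a maximal modular ideal of $\mathcal A$. If $H^1(\mathcal A,M^* )=\{0\}$, then $\mathcal A^2$ is dense in $M$.
   Context: $\mathcal A^2$ is the linear span of $\{ab:a,b\in\mathcal A\}$. A two-sided ideal $M$ is modular if there is $u\in\mathcal A$ with $b-bu\in M$ and $b-ub\in M$ for all $b\in\mathcal A$; a maximal modular ideal is a proper modular ideal that is maximal among proper ideals. $M^*$ is a Banach $\mathcal A$-bimodule with $\langle x,a\cdot f\rangle=\langle xa,f\rangle$, $\langle x,f\cdot a\rangle=\langle ax,f\rangle$; $H^1(\mathcal A,M^* )=\{0\}$ means every derivation $D:\mathcal A\to M^*$ (continuous linear, $D(ab)=a\cdot D(b)+D(a)\cdot b$) is of the form $D(a)=a\cdot f-f\cdot a$ for some $f\in M^*$. *)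

(* Defs.v *)
(* Complex Banach algebras over C := R[i]
   (R : realType), possibly non-unital, given by a complete normed C-space
   V together with a multiplication [mul]. *)
From mathcomp Require Import all_boot all_algebra.
From mathcomp Require Import all_classical all_reals all_analysis.
From mathcomp.real_closed Require Export complex.
Export Num.Theory GRing.Theory.

Set Implicit Arguments.
Unset Strict Implicit.
Unset Printing Implicit Defensive.

Local Open Scope ring_scope.
Local Open Scope classical_set_scope.

Section Defs.
Variables (K : numFieldType) (V : normedModType K) (mul : V -> V -> V).

Definition banach_algebra_mul : Prop :=
  (forall a b c, mul a (mul b c) = mul (mul a b) c) /\
  [/\ (forall a b c, mul (a + b) c = mul a c + mul b c),
      (forall a b c, mul a (b + c) = mul a b + mul a c),
      (forall (k : K) a b, mul (k *: a) b = k *: mul a b),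
      (forall (k : K) a b, mul a (k *: b) = k *: mul a b) &
      (forall a b, `|mul a b| <= `|a| * `|b|)].

Definition subspace (M : set V) : Prop :=
  [/\ M 0, (forall x y, M x -> M y -> M (x + y)) &
      (forall (k : K) x, M x -> M (k *: x))].

Definition two_sided_ideal (M : set V) : Prop :=
  subspace M /\ (forall a m, M m -> M (mul a m) /\ M (mul m a)).

Definition closed_ideal (M : set V) : Prop := two_sided_ideal M /\ closed M.

Definition codim_one (M : set V) : Prop :=
  exists u, ~ M u /\ forall v, exists (k : K) (m : V), M m /\ v = k *: u + m.

Definition modular_ideal (M : set V) : Prop :=
  two_sided_ideal M /\
  exists u, forall b, M (b - mul b u) /\ M (b - mul u b).

Definition proper (M : set V) : Prop := M <> [set: V].

Definition maximal_modular_ideal (M : set V) : Prop :=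
  [/\ modular_ideal M, proper M &
      forall J, two_sided_ideal J -> proper J -> M `<=` J -> J = M].

Definition square_span : set V :=
  [set z | exists (n : nat) (a b : 'I_n -> V), z = \sum_(i < n) mul (a i) (b i)].

(* Elements of the dual M^* are represented by functions f : V -> K of which
   only the restriction to M matters: linear and bounded on M. *)
Definition dual_elt (M : set V) (f : V -> K) : Prop :=
  [/\ (forall x y, M x -> M y -> f (x + y) = f x + f y),
      (forall (k : K) x, M x -> f (k *: x) = k * f x) &
      exists C : K, forall x, M x -> `|f x| <= C * `|x|].

(* A derivation D : A -> M^*, represented as D a x = <x, D(a)>.
   The module actions are <x, a.f> = <xa, f> and <x, f.a> = <ax, f>, so
   D(ab) = a.D(b) + D(a).b reads <x,D(ab)> = <xa, D(b)> + <bx, D(a)>. *)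
Definition derivation (M : set V) (D : V -> V -> K) : Prop :=
  [/\ (forall a, dual_elt M (D a)),
      (forall a b x, M x -> D (a + b) x = D a x + D b x),
      (forall (k : K) a x, M x -> D (k *: a) x = k * D a x),
      (exists C : K, forall a x, M x -> `|D a x| <= C * `|a| * `|x|) &
      (forall a b x, M x -> D (mul a b) x = D b (mul x a) + D a (mul b x))].

(* inner derivation: D(a) = a.f - f.a for some f in M^* *)
Definition inner_derivation (M : set V) (D : V -> V -> K) : Prop :=
  exists f, dual_elt M f /\
    forall a x, M x -> D a x = f (mul x a) - f (mul a x).

Definition H1_dual_trivial (M : set V) : Prop :=
  forall D, derivation M D -> inner_derivation M D.

Definition dense_in (S M : set V) : Prop := S `<=` M /\ M `<=` closure S.

End Defs.

(* Main.v *)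
Require Import Defs.
From mathcomp Require Import all_boot all_algebra.
From mathcomp Require Import all_classical all_reals all_analysis.
From mathcomp.real_closed Require Import complex.
From mathcomp Require Import lra ring.
Import mathcomp.order.order.Order.TTheory GRing.Theory Num.Theory.
Local Open Scope ring_scope.
Local Open Scope complex_scope.
Local Open Scope classical_set_scope.

Section RealHB.
Variables (R : realType) (V : lmodType R[i]) (p : V -> R).
Hypothesis pD : forall x y, p (x + y) <= p x + p y.
Hypothesis pZ : forall (r : R) x, 0 <= r -> p (r%:C *: x) = r * p x.

Definition good (G : set (V * R)) : Prop :=
  [/\ G (0, 0),
   (forall x a b, G (x, a) -> G (x, b) -> a = b),
   (forall x y a b, G (x, a) -> G (y, b) -> G (x + y, a + b)),
   (forall (r : R) x a, G (x, a) -> G (r%:C *: x, r * a)) &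
   (forall x a, G (x, a) -> a <= p x)].

Lemma local_good U : U (0, 0) ->
  (forall z1 z2, U z1 -> U z2 -> exists H, [/\ good H, H `<=` U, H z1 & H z2]) ->
  good U.
Proof.
move=> U0 loc; split => //.
- move=> x a b Ua Ub; have [H [[_ Hf _ _ _] _ H1 H2]] := loc _ _ Ua Ub.
  exact: Hf H1 H2.
- move=> x y a b Ua Ub; have [H [[_ _ Ha _ _] HU H1 H2]] := loc _ _ Ua Ub.
  exact/HU/Ha.
- move=> r x a Ua; have [H [[_ _ _ Hs _] HU H1 _]] := loc _ _ Ua Ua.
  exact/HU/Hs.
- move=> x a Ua; have [H [[_ _ _ _ Hp] HU H1 _]] := loc _ _ Ua Ua.
  exact: Hp.
Qed.

Lemma scC1 (x : V) : (1%:C) *: x = x.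
Proof. by rewrite rmorph1 scale1r. Qed.

Lemma good_sub G x y a b : good G -> G (x, a) -> G (y, b) -> G (x - y, a - b).
Proof.
case=> _ _ GD GZ _ Ga Gb; have := GZ (-1) _ _ Gb.
rewrite rmorphN rmorph1 scaleN1r mulN1r => Gb'.
exact: GD.
Qed.


Lemma scCA (r s : R) (x : V) : r%:C *: (s%:C *: x) = (r * s)%:C *: x.
Proof. by rewrite scalerA rmorphM. Qed.

Lemma extend G v : good G -> ~ (exists a, G (v, a)) ->
  exists G', [/\ good G', G `<=` G' & exists z, G' z /\ ~ G z].
Proof.
move=> gG nv; have [G0 Gf GD GZ Gp] := gG.
pose E := [set y | exists x g, G (x, g) /\ y = g - p (x - v)].
have ub x g y h : G (x, g) -> G (y, h) -> g - p (x - v) <= p (y + v) - h.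
  move=> Gx Gy; have := Gp _ _ (GD _ _ _ _ Gx Gy).
  have := pD (x - v) (y + v).
  have -> : x - v + (y + v) = x + y by rewrite addrACA addNr addr0.
  lra.
have E0 : E !=set0 by exists (0 - p (0 - v)), 0, 0.
have hsE : has_sup E.
  split => //; exists (p (0 + v) - 0) => _ [x [g [Gx ->]]]; exact: ub.
pose c := sup E.
have cub y h : G (y, h) -> c <= p (y + v) - h.
  move=> Gy; apply: ge_sup => // _ [x [g [Gx ->]]]; exact: ub.
have clb x g : G (x, g) -> g - p (x - v) <= c.
  move=> Gx; apply: sup_upper_bound => //; by exists x, g.
pose G' := [set z | exists x a (t : R), G (x, a) /\ z = (x + t%:C *: v, a + t * c)].
have uniq x a t x' a' t' : G (x, a) -> G (x', a') ->
    x + t%:C *: v = x' + t'%:C *: v -> t = t' /\ x = x'.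
  move=> Gx Gx' e.
  have tt : t = t'.
    apply/eqP; apply/negPn/negP => ntt; apply: nv.
    have := GZ ((t - t')^-1) _ _ (good_sub _ _ _ _ _ gG Gx' Gx).
    have -> : ((t - t')^-1)%:C *: (x' - x) = v.
      have -> : x' - x = (t - t')%:C *: v.
        by rewrite rmorphB scalerBl -(addrK (t'%:C *: v) x') -e addrAC [x + _]addrC addrK.
      by rewrite scCA mulVf ?scC1 // subr_eq0.
    by move=> H; eexists; exact: H.
  by split=> //; move: e; rewrite tt => /addIr.
exists G'; split.
- split.
  + exists 0, 0, 0; split => //; by rewrite rmorph0 scale0r mul0r !addr0.
  + move=> x a b [y [a1 [t [Gy [-> ->]]]]] [y' [a1' [t' [Gy' []]]]].
    move=> /(uniq _ _ _ _ _ _ Gy Gy') [tt yy] ->; subst t' y'.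
    by rewrite (Gf _ _ _ Gy Gy').
  + move=> x y a b [x1 [a1 [t [Gx [-> ->]]]]] [y1 [b1 [s [Gy [-> ->]]]]].
    exists (x1 + y1), (a1 + b1), (t + s); split; first exact: GD.
    congr pair; first by rewrite rmorphD scalerDl addrACA.
    by rewrite mulrDl addrACA.
  + move=> r x a [x1 [a1 [t [Gx [-> ->]]]]].
    exists (r%:C *: x1), (r * a1), (r * t); split; first exact: GZ.
    by congr pair; [rewrite scalerDr scCA | rewrite mulrDr mulrA].
  + move=> x a [x1 [a1 [t [Gx [-> ->]]]]].
    have [t0|t0|->] := ltgtP t 0; last first.
    * by rewrite mul0r addr0 rmorph0 scale0r addr0; exact: Gp.
    * have Gx' := GZ (t^-1) _ _ Gx.
      have := cub _ _ Gx'.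
      have -> : x1 + t%:C *: v = t%:C *: (t^-1%:C *: x1 + v).
        by rewrite scalerDr scCA divff ?scC1 // gt_eqF.
      rewrite pZ; last exact: ltW.
      move=> h; have := ler_wpM2l (ltW t0) h.
      rewrite mulrBr mulrA divff ?gt_eqF // mul1r; lra.
    * pose s := - t; have s0 : 0 < s by rewrite /s oppr_gt0.
      have Gx' := GZ (s^-1) _ _ Gx.
      have := clb _ _ Gx'.
      have -> : x1 + t%:C *: v = s%:C *: (s^-1%:C *: x1 - v).
        by rewrite scalerBr scCA divff ?scC1 ?gt_eqF // rmorphN scaleNr opprK.
      rewrite pZ; last exact: ltW.
      move=> h; have := ler_wpM2l (ltW s0) h.
      rewrite mulrBr mulrA divff ?gt_eqF // mul1r /s; lra.
- move=> [x a] Gx; exists x, a, 0; split => //.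
  by rewrite rmorph0 scale0r addr0 mul0r addr0.
- exists (v, c); split.
  + by exists 0, 0, 1; rewrite add0r rmorph1 scale1r mul1r add0r.
  + by move=> Gv; apply: nv; exists c.
Qed.


Lemma hahn_banach G0 : good G0 -> exists l : V -> R,
  [/\ (forall x a, G0 (x, a) -> l x = a),
      (forall x y, l (x + y) = l x + l y),
      (forall (r : R) x, l (r%:C *: x) = r * l x) &
      (forall x, l x <= p x)].
Proof.
move=> gG0.
pose P := fun H => good (G0 `|` H).
have chain : forall F : set (set (V * R)), F `<=` P -> total_on F subset ->
    P (\bigcup_(X in F) X).
  move=> F FP Ftot; apply: local_good; first by left; case: gG0.
  have sub X : F X -> G0 `|` X `<=` G0 `|` \bigcup_(X in F) X.
    by move=> FX z [?|?]; [left|right; exists X].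
  move=> z1 z2 [G1|[X FX X1]] [G2|[Y FY Y2]].
  - by exists G0; split => //; move=> z ?; left.
  - by exists (G0 `|` Y); split; [exact: FP|exact: sub|left|right].
  - by exists (G0 `|` X); split; [exact: FP|exact: sub|right|left].
  - have [XY|YX] := Ftot _ _ FX FY.
    + by exists (G0 `|` Y); split; [exact: FP|exact: sub|right; exact: XY|right].
    + by exists (G0 `|` X); split; [exact: FP|exact: sub|right|right; exact: YX].
have [A [PA maxA]] := Zorn_bigcup chain.
have tot : forall v, exists a, (G0 `|` A) (v, a).
  move=> v; apply: contrapT => nv.
  have [G' [gG' sG' [z [G'z nGz]]]] := extend _ v PA nv.
  apply: (maxA G').
    split; first by move=> y Ay; apply: sG'; right.
    by move=> /(_ z G'z) Az; apply: nGz; right.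
  rewrite /P; suff -> : G0 `|` G' = G' by [].
  by apply/seteqP; split => [y [?|?]|y ?]; [apply: sG'; left|by []|right].
have [l Hl] := choice tot.
have [_ Gf GD GZ Gp] := PA.
exists l; split.
- by move=> x a G0x; apply: Gf (Hl x) _; left.
- by move=> x y; apply: Gf (Hl (x + y)) _; apply: GD.
- by move=> r x; apply: Gf (Hl _) _; apply: GZ.
- by move=> x; apply: Gp (Hl x).
Qed.

End RealHB.

Section Alg.
Variables (K : numFieldType) (V : normedModType K) (mul : V -> V -> V) (M : set V).
Hypothesis bam : banach_algebra_mul mul.
Hypothesis idM : two_sided_ideal mul M.

Lemma am_mulA a b c : mul a (mul b c) = mul (mul a b) c.
Proof. by case: bam. Qed.
Lemma am_mulDl a b c : mul (a + b) c = mul a c + mul b c.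
Proof. by case: bam => _ []. Qed.
Lemma am_mulDr a b c : mul a (b + c) = mul a b + mul a c.
Proof. by case: bam => _ []. Qed.
Lemma am_mulZl (k : K) a b : mul (k *: a) b = k *: mul a b.
Proof. by case: bam => _ []. Qed.
Lemma am_mulZr (k : K) a b : mul a (k *: b) = k *: mul a b.
Proof. by case: bam => _ []. Qed.
Lemma am_mul0l b : mul 0 b = 0.
Proof. by have := am_mulZl 0 0 b; rewrite !scale0r. Qed.
Lemma am_mul0r a : mul a 0 = 0.
Proof. by have := am_mulZr 0 a 0; rewrite !scale0r. Qed.
Lemma am_mulNl a b : mul (- a) b = - mul a b.
Proof. by rewrite -scaleN1r am_mulZl scaleN1r. Qed.
Lemma am_mulNr a b : mul a (- b) = - mul a b.
Proof. by rewrite -scaleN1r am_mulZr scaleN1r. Qed.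
Lemma am_mulBl a b c : mul (a - b) c = mul a c - mul b c.
Proof. by rewrite am_mulDl am_mulNl. Qed.
Lemma am_mulBr a b c : mul a (b - c) = mul a b - mul a c.
Proof. by rewrite am_mulDr am_mulNr. Qed.

Lemma M0 : M 0. Proof. by case: idM => [[? ? ?] ?]. Qed.
Lemma MD x y : M x -> M y -> M (x + y). Proof. by case: idM => [[_ H _] _]; apply: H. Qed.
Lemma MZ (k : K) x : M x -> M (k *: x). Proof. by case: idM => [[_ _ H] _]; apply: H. Qed.
Lemma MN x : M x -> M (- x). Proof. by move=> /(MZ (-1)); rewrite scaleN1r. Qed.
Lemma MB x y : M x -> M y -> M (x - y). Proof. by move=> Mx /MN; apply: MD. Qed.
Lemma Ml a m : M m -> M (mul a m). Proof. by move=> Mm; case: idM => _ H; case: (H a m Mm). Qed.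
Lemma Mr a m : M m -> M (mul m a). Proof. by move=> Mm; case: idM => _ H; case: (H a m Mm). Qed.

Arguments MD {x y}.
Arguments MB {x y}.
Definition cong x y := M (x - y).
Lemma cong_refl x : cong x x. Proof. by rewrite /cong subrr; exact: M0. Qed.
Lemma cong_sym x y : cong x y -> cong y x.
Proof. by rewrite /cong => /MN; rewrite opprB. Qed.
Lemma cong_trans x y z : cong x y -> cong y z -> cong x z.
Proof. by rewrite /cong => h1 h2; have := MD h1 h2; rewrite addrA subrK. Qed.
Lemma congD x y x' y' : cong x x' -> cong y y' -> cong (x + y) (x' + y').
Proof. by rewrite /cong => h1 h2; have := MD h1 h2; rewrite opprD addrACA. Qed.
Lemma congZ (k : K) x y : cong x y -> cong (k *: x) (k *: y).
Proof. by rewrite /cong => /(MZ k); rewrite scalerBr. Qed.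
Lemma congMl a x y : cong x y -> cong (mul a x) (mul a y).
Proof. by rewrite /cong => /(Ml a); rewrite am_mulBr. Qed.
Lemma congMr a x y : cong x y -> cong (mul x a) (mul y a).
Proof. by rewrite /cong => /(Mr a); rewrite am_mulBl. Qed.
Arguments cong_sym {x y}.
Arguments cong_trans {x y z}.
Arguments congD {x y x' y'}.
Arguments congZ k {x y}.
Arguments congMl a {x y}.
Arguments congMr a {x y}.
Lemma congM a b x y : cong a x -> cong b y -> cong (mul a b) (mul x y).
Proof. by move=> h1 h2; apply: cong_trans (congMr b h1) (congMl x h2). Qed.
Arguments congM {a b x y}.
Lemma congM0 x : M x -> cong x 0. Proof. by rewrite /cong subr0. Qed.
Lemma cong0M x : cong x 0 -> M x. Proof. by rewrite /cong subr0. Qed.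

Lemma square_sub : codim_one M -> ~ maximal_modular_ideal mul M ->
  square_span mul `<=` M.
Proof.
move=> [u [nu dec]] nmax.
have decc v : exists k : K, cong v (k *: u).
  by have [k [m [Mm ->]]] := dec v; exists k; rewrite /cong addrC addKr.
have Muu : M (mul u u).
  apply: contrapT => nMuu; apply: nmax.
  have [g guu] := decc (mul u u).
  have g0 : g != 0.
    apply/negP => /eqP g0; apply: nMuu; apply: cong0M.
    by move: guu; rewrite g0 scale0r.
  split.
  - split => //; exists (g^-1 *: u) => b; have [be hb] := decc b.
    have key : cong (mul b (g^-1 *: u)) b /\ cong (mul (g^-1 *: u) b) b.
      split.
      + rewrite am_mulZr; apply: cong_trans (cong_sym hb).
        apply: cong_trans (congZ _ (congMr u hb)) _.
        rewrite am_mulZl scalerA mulrC; apply: cong_trans (congZ _ guu) _.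
        by rewrite scalerA mulfVK //; exact: cong_refl.
      + rewrite am_mulZl; apply: cong_trans (cong_sym hb).
        apply: cong_trans (congZ _ (congMl u hb)) _.
        rewrite am_mulZr scalerA mulrC; apply: cong_trans (congZ _ guu) _.
        by rewrite scalerA mulfVK //; exact: cong_refl.
    by case: key => /cong_sym h1 /cong_sym h2.
  - by move=> MT; apply: nu; rewrite MT.
  - move=> J [[J0 JD JZ] JI] pJ MJ; apply/seteqP; split => // j Jj.
    have [k [m [Mm ej]]] := dec j.
    have [k0|k0] := eqVneq k 0.
      by rewrite ej k0 scale0r add0r.
    exfalso; apply: pJ; apply/seteqP; split => // v _.
    have Ju : J u.
      have : J (k^-1 *: (j + (-1) *: m)) by apply/JZ/JD => //; apply/JZ/MJ.
      by rewrite scaleN1r ej addrK scalerA mulVf // scale1r.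
    have [k' [m' [Mm' ->]]] := dec v.
    by apply: JD; [apply: JZ | apply: MJ].
move=> _ [n [a [b ->]]].
apply: (big_ind M) => //; [exact: M0 | by move=> x y; apply: MD |].
move=> i _; apply: cong0M.
have [ka ha] := decc (a i); have [kb hb] := decc (b i).
apply: cong_trans (congM ha hb) _.
by rewrite am_mulZl am_mulZr; apply/congM0/MZ/MZ.
Qed.

End Alg.

Section Sep.
Variables (R : realType) (V : normedModType R[i]).

Definition nrm (x : V) : R := complex.Re `|x|.

Lemma normE (x : V) : `|x| = (nrm x)%:C.
Proof. by rewrite /nrm complex.RRe_real // ger0_real. Qed.

Lemma norm_RC (r : R) : `|r%:C| = `|r|%:C.
Proof. by rewrite normc_def /= expr0n /= addr0 sqrtr_sqr. Qed.

Lemma norm_i : `|'i| = 1 :> R[i].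
Proof. by rewrite normc_def /= expr0n /= add0r expr1n sqrtr1. Qed.

Lemma nrmD x y : nrm (x + y) <= nrm x + nrm y.
Proof. rewrite -lecR rmorphD /= -!normE. exact: ler_normD. Qed.

Lemma nrmZ (r : R) x : 0 <= r -> nrm (r%:C *: x) = r * nrm x.
Proof.
move=> r0; apply: complexI; rewrite -normE normrZ norm_RC ger0_norm //.
by rewrite normE rmorphM.
Qed.

Lemma nrm_ge0 x : 0 <= nrm x.
Proof. by rewrite -ler0c -normE. Qed.

Lemma nrmN x : nrm (- x) = nrm x.
Proof. by rewrite /nrm normrN. Qed.


Lemma ReD (a b : R[i]) : complex.Re (a + b) = complex.Re a + complex.Re b.
Proof. by case: a; case: b. Qed.

Lemma ReRM (r : R) (a : R[i]) : complex.Re (r%:C * a) = r * complex.Re a.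
Proof. by case: a => x y /=; rewrite mul0r subr0. Qed.

Lemma cid1 (a b A B : R) :
  ((a*A + b*B)%:C - 'i * (a*B - b*A)%:C) = (a +i* b) * (A%:C - 'i * B%:C).
Proof. apply/eqP; rewrite eq_complex /=. apply/andP; split; apply/eqP; ring. Qed.
Lemma cid2 (k : R[i]) : k = (complex.Re k)%:C + (complex.Im k)%:C * 'i.
Proof. case: k => a b; apply/eqP; rewrite eq_complex /=. apply/andP; split; apply/eqP; ring. Qed.
Lemma cid3 (k : R[i]) : 'i * k = (complex.Re k)%:C * 'i + (- complex.Im k)%:C.
Proof. case: k => a b; apply/eqP; rewrite eq_complex /=. apply/andP; split; apply/eqP; ring. Qed.

Lemma separation (S : set V) (x0 : V) : Defs.subspace S -> ~ closure S x0 ->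
  exists psi : V -> R[i],
  [/\ (forall x y, psi (x + y) = psi x + psi y),
      (forall k x, psi (k *: x) = k * psi x),
      (forall x, `|psi x| <= 2 * `|x|),
      (forall s, S s -> psi s = 0) & psi x0 != 0].
Proof.
move=> sS ncl; have [S0 SD SZ] := sS.
have [B [nB SB]] : exists B, nbhs x0 B /\ ~ (S `&` B !=set0).
  apply: contrapT => h; apply: ncl => B nB; apply: contrapT => h2.
  by apply: h; exists B.
have [e He] := nbhs_ex nB.
pose d := complex.Re e%:num.
have eNum : e%:num = d%:C by rewrite /d complex.RRe_real // gtr0_real.
have d0 : 0 < d by rewrite -ltcR rmorph0 /= -eNum.
have far s : S s -> d <= nrm (x0 - s).
  move=> Ss; rewrite leNgt; apply/negP => h; apply: SB; exists s; split => //.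
  apply: He; rewrite -ball_normE /= normE eNum ltcR //.
have SN s : S s -> S (- s) by move=> /(SZ (-1)); rewrite scaleN1r.
pose G0 := [set z | exists s t, S s /\ z = (s + t *: x0, d * complex.Re t)].
have gG0 : @good R V nrm G0.
  split.
  - by exists 0, 0; split => //; rewrite scale0r addr0 mulr0.
  - move=> x a b [s [t [Ss [-> ->]]]] [s' [t' [Ss' []]]] e1 ->.
    suff -> : t = t' by [].
    apply/eqP; apply/negPn/negP => ntt.
    have : S ((t' - t)^-1 *: (s - s')) by apply/SZ/SD => //; exact: SN.
    have -> : s - s' = (t' - t) *: x0.
      rewrite scalerBl; apply/eqP; rewrite subr_eq addrAC [t' *: x0 + s']addrC -e1 addrK //.
    rewrite scalerA mulVf ?scale1r; last by rewrite subr_eq0 eq_sym.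
    by move=> /far; rewrite subrr /nrm normr0 (_ : complex.Re 0 = 0) // leNgt d0.
  - move=> x y a b [s [t [Ss [-> ->]]]] [s' [t' [Ss' [-> ->]]]].
    exists (s + s'), (t + t'); split; first exact: SD.
    by rewrite scalerDl addrACA ReD mulrDr.
  - move=> r x a [s [t [Ss [-> ->]]]].
    exists (r%:C *: s), (r%:C * t); split; first exact: SZ.
    by rewrite scalerDr scalerA ReRM mulrCA.
  - move=> x a [s [t [Ss [-> ->]]]].
    have [->|t0] := eqVneq t 0.
      by rewrite scale0r addr0 /= mulr0; exact: nrm_ge0.
    have Ss' : S (- (t^-1 *: s)) by apply/SN/SZ.
    have E : s + t *: x0 = t *: (x0 - - (t^-1 *: s)).
      by rewrite opprK scalerDr scalerA divff // scale1r addrC.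
    rewrite -lecR E -normE normrZ normE rmorphM /=.
    have h1 := far _ Ss'.
    have h2 : (complex.Re t)%:C <= `|t|.
      apply: le_trans (normc_ge_Re t); rewrite lecR; exact: ler_norm.
    apply: (@le_trans _ _ (d%:C * `|t|)).
      by apply: ler_wpM2l => //; rewrite ler0c ltW.
    by rewrite [d%:C * _]mulrC; apply: ler_wpM2l => //; rewrite lecR.
have [l [l0 lD lZ lp]] := @hahn_banach R V nrm nrmD nrmZ G0 gG0.
have lN x : l (- x) = - l x.
  by have := lZ (-1) x; rewrite rmorphN1 scaleN1r mulN1r.
have labs x : `|l x| <= nrm x.
  rewrite ler_norml; apply/andP; split; last exact: lp.
  by rewrite lerNl -lN -(nrmN x); exact: lp.
have nrmi x : nrm ('i *: x) = nrm x.
  by rewrite /nrm normrZ norm_i mul1r.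
have lS s : S s -> l s = 0.
  move=> Ss; apply: l0; exists s, 0; split => //.
  by rewrite scale0r addr0 (_ : complex.Re 0 = 0) // mulr0.
pose psi x := (l x)%:C - 'i * (l ('i *: x))%:C.
exists psi; split.
- move=> x y; rewrite /psi scalerDr !lD !rmorphD /= mulrDr opprD addrACA //.
- move=> k x; rewrite /psi.
  have kE : k *: x = (complex.Re k)%:C *: x + (complex.Im k)%:C *: ('i *: x).
    by rewrite scalerA -scalerDl -cid2.
  have ikE : 'i *: (k *: x) =
      (complex.Re k)%:C *: ('i *: x) + (- complex.Im k)%:C *: x.
    by rewrite !scalerA -scalerDl -cid3.
  rewrite ikE kE !lD !lZ mulNr.
  transitivity ((complex.Re k +i* complex.Im k) * ((l x)%:C - 'i * (l ('i *: x))%:C));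
    last by clear kE ikE; case: k.
  exact: cid1.
- move=> x; rewrite /psi; apply: le_trans (ler_normB _ _) _.
  rewrite normrM norm_i mul1r !norm_RC.
  rewrite mulr_natl mulr2n normE lerD //; rewrite lecR.
    exact: labs.
  by rewrite -(nrmi x); exact: labs.
- move=> s Ss; rewrite /psi lS // lS; last exact: SZ.
  by rewrite rmorph0 /= mulr0 subr0.
- rewrite /psi; have -> : l x0 = d.
    apply: l0; exists 0, 1; split => //.
    by rewrite scale1r add0r (_ : complex.Re 1 = 1) // mulr1.
  have -> : l ('i *: x0) = 0.
    apply: l0; exists 0, 'i; split => //.
    by rewrite add0r (_ : complex.Re 'i = 0) // mulr0.
  by rewrite rmorph0 /= mulr0 subr0 eq_complex /= negb_and gt_eqF.
Qed.

End Sep.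

Lemma square_span_subspace (R : realType) (V : completeNormedModType R[i])
    (mul : V -> V -> V) :
  banach_algebra_mul mul -> Defs.subspace (square_span mul).
Proof.
move=> bam; split.
- by exists 0%N, (fun _ => 0), (fun _ => 0); rewrite big_ord0.
- move=> x y [n [a [b ->]]] [m [a' [b' ->]]].
  exists (n + m)%N, (fun i => match fintype.split i with inl j => a j | inr j => a' j end),
    (fun i => match fintype.split i with inl j => b j | inr j => b' j end).
  rewrite big_split_ord /=; congr (_ + _); apply: eq_bigr => i _.
    by rewrite (unsplitK (inl _)).
  by rewrite (unsplitK (inr _)).
- move=> k x [n [a [b ->]]]; exists n, (fun i => k *: a i), b.
  by rewrite scaler_sumr; apply: eq_bigr => i _; rewrite am_mulZl.
Qed.

Theorem corollary3p9 (R : realType) (V : completeNormedModType R[i])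
    (mul : V -> V -> V) (M : set V) :
  banach_algebra_mul mul ->
  closed_ideal mul M ->
  codim_one M ->
  ~ maximal_modular_ideal mul M ->
  H1_dual_trivial mul M ->
  dense_in (square_span mul) M.
Proof.
move=> bam cM c1 nmax H1.
have idM := cM.1.
have Ssub := @square_sub _ _ mul M bam idM c1 nmax.
split => // x0 Mx0.
apply: contrapT => ncl.
have sS := @square_span_subspace R V mul bam.
have [psi [pD pZ pB pS p0]] := @separation R V _ x0 sS ncl.
pose D a x := psi a * psi x.
have prod a b : square_span mul (mul a b).
  by exists 1%N, (fun _ => a), (fun _ => b); rewrite big_ord1.
have dD : derivation mul M D.
  split.
  - move=> a; split.
    + by move=> x y _ _; rewrite /D pD mulrDr.
    + by move=> k x _; rewrite /D pZ mulrCA.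
    + exists (`|psi a| * 2) => x _; rewrite /D normrM -mulrA.
      by apply: ler_wpM2l => //.
  - by move=> a b x _; rewrite /D pD mulrDl.
  - by move=> k a x _; rewrite /D pZ mulrA.
  - exists 4 => a x _; rewrite /D normrM.
    have -> : 4 * `|a| * `|x| = (2 * `|a|) * (2 * `|x|) by ring.
    by apply: ler_pM => //.
  - move=> a b x _; rewrite /D (pS _ (prod a b)) (pS _ (prod x a)) (pS _ (prod b x)).
    by rewrite !mul0r !mulr0 addr0.
have [f [_ hf]] := H1 D dD.
have := hf x0 x0 Mx0; rewrite /D subrr => /eqP.
by rewrite mulf_eq0 orbb (negbTE p0).
Qed.
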